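(* Let $\hat{\mathfrak{so}}$ be the extended Schr\''odinger-Virasoro algebra over $\mathbb{C}$ and, for $g\in\frac12\mathbb{Z}$, let $\Delta_g(\hat{\mathfrak{so}})$ be the space of $\frac12$-derivations of $\hat{\mathfrak{so}}$ of degree $g$. Then $\Delta_{j+\frac12}(\hat{\mathfrak{so}})=0$ for every $j\in\mathbb{Z}$.
   Context: The extended Schr\''odinger-Virasoro algebra $\hat{\mathfrak{so}}$ is the complex Lie algebra with basis $\{L_n,M_n,N_n,Y_{n+\frac12},C_L,C_{LN},C_N\mid n\in\mathbb{Z}\}$ and brackets (all others zero, $C_L,C_{LN},C_N$ central): $[L_m,L_n]=(n-m)L_{m+n}+\delta_{m+n,0}\frac{m^3-m}{12}C_L$, $[L_m,M_n]=nM_{m+n}$, $[L_m,N_n]=nN_{m+n}+\delta_{m+n,0}(m^2-m)C_{LN}$, $[N_m,M_n]=2M_{m+n}$, $[L_m,Y_{n+\frac12}]=(n+\frac{1-m}{2})Y_{m+n+\frac12}$, $[N_m,Y_{n+\frac12}]=Y_{m+n+\frac12}$, $[Y_{m+\frac12},Y_{n+\frac12}]=(m-n)M_{m+n+1}$, $[N_m,N_n]=n\delta_{m+n,0}C_N$, for all $m,n\in\mathbb{Z}$. It is $\frac12\mathbb{Z}$-graded by $\hat{\mathfrak{so}}_0=\langle L_0,M_0,N_0,C_L,C_{LN},C_N\rangle$, $\hat{\mathfrak{so}}_n=\langle L_n,M_n,N_n\rangle$ for $n\in\mathbb{Z}\setminus\{0\}$, $\hat{\mathfrak{so}}_{n+\frac12}=\langle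 Y_{n+\frac12}\rangle$. A $\frac12$-derivation of a Lie algebra $L$ is a linear map $\varphi:L\to L$ with $\varphi([x,y])=\frac12([\varphi(x),y]+[x,\varphi(y)])$ for all $x,y$. A $\frac12$-derivation $\varphi$ has degree $g$ if $\varphi(\hat{\mathfrak{so}}_h)\subseteq\hat{\mathfrak{so}}_{g+h}$ for all $h\in\frac12\mathbb{Z}$. *)

(* Defs.v *)
(* The extended Schroedinger-Virasoro algebra over C,
   where C := R[i] (real_closed's complex numbers) for R a realType
   (= the real numbers, unique up to isomorphism). *)
From HB Require Import structures.
From mathcomp Require Import all_boot all_order all_algebra.
From mathcomp Require Import finmap.
From mathcomp.multinomials Require Import monalg.
From mathcomp.real_closed Require Import complex.
From mathcomp Require Import reals.

Set Implicit Arguments.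
Unset Strict Implicit.
Unset Printing Implicit Defensive.

Import Order.TTheory GRing.Theory Num.Theory.
Local Open Scope ring_scope.

(* Basis index: sL n = L_n, sM n = M_n, sN n = N_n, sY n = Y_{n+1/2},
   sCL = C_L, sCLN = C_{LN}, sCN = C_N. *)
Inductive sidx :=
  | sL of int | sM of int | sN of int | sY of int | sCL | sCLN | sCN.

Definition sidx_enc (k : sidx) : nat * int :=
  match k with
  | sL n => (0%N, n) | sM n => (1%N, n) | sN n => (2%N, n) | sY n => (3%N, n)
  | sCL => (4%N, 0) | sCLN => (5%N, 0) | sCN => (6%N, 0)
  end.
Definition sidx_dec (p : nat * int) : option sidx :=
  match p with
  | (0, n) => Some (sL n) | (1, n) => Some (sM n) | (2, n) => Some (sN n)
  | (3, n) => Some (sY n) | (4, _) => Some sCL | (5, _) => Some sCLN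
  | (6, _) => Some sCN | _ => None
  end%N.
Lemma sidx_encK : pcancel sidx_enc sidx_dec. Proof. by case. Qed.
HB.instance Definition _ := Countable.copy sidx (pcan_type sidx_encK).

Definition SV (R : realType) := {malg (R[i])[sidx]}.

Section Bracket.
Variable R : realType.
Local Notation C := (R[i]).
Local Notation V := (SV R).
Local Notation e c k := (<< (c : C) *g k >> : V).
Local Notation zC z := ((z : int)%:~R : C).
Local Notation dlt m n := (((m + n == 0 :> int) : nat)%:R : C).

Definition br (a b : sidx) : V :=
  match a, b with
  | sL m, sL n => e (zC (n - m)) (sL (m + n))
                  + e (dlt m n * zC (m ^+ 3 - m) / 12%:R) sCL
  | sL m, sM n => e (zC n) (sM (m + n))
  | sM n, sL m => - e (zC n) (sM (m + n))
  | sL m, sN n => e (zC n) (sN (m + n)) + e (dlt m n * zC (m ^+ 2 - m)) sCLN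
  | sN n, sL m => - (e (zC n) (sN (m + n)) + e (dlt m n * zC (m ^+ 2 - m)) sCLN)
  | sN m, sM n => e 2%:R (sM (m + n))
  | sM n, sN m => - e 2%:R (sM (m + n))
  | sL m, sY n => e (zC n + zC (1 - m) / 2%:R) (sY (m + n))
  | sY n, sL m => - e (zC n + zC (1 - m) / 2%:R) (sY (m + n))
  | sN m, sY n => e 1 (sY (m + n))
  | sY n, sN m => - e 1 (sY (m + n))
  | sY m, sY n => e (zC (m - n)) (sM (m + n + 1))
  | sN m, sN n => e (zC n * dlt m n) sCN
  | _, _ => 0
  end.

Definition sbracket (x y : V) : V :=
  \sum_(a <- msupp x) \sum_(b <- msupp y) (x@_a * y@_b) *: br a b.

(* Twice the degree of a basis vector (degrees lie in (1/2)Z). *)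
Definition dg2 (k : sidx) : int :=
  match k with
  | sL n | sM n | sN n => 2 * n
  | sY n => 2 * n + 1
  | sCL | sCLN | sCN => 0
  end.

Definition in_grade (h2 : int) (x : V) : Prop :=
  forall k, k \in msupp x -> dg2 k = h2.

Definition half_derivation (phi : V -> V) : Prop :=
  forall x y, phi (sbracket x y) =
              (2%:R : C)^-1 *: (sbracket (phi x) y + sbracket x (phi y)).

Definition has_degree2 (g2 : int) (phi : V -> V) : Prop :=
  forall h2 x, in_grade h2 x -> in_grade (g2 + h2) (phi x).
End Bracket.

(* Main.v *)
Require Import Defs.
From HB Require Import structures.
From mathcomp Require Import all_boot all_order all_algebra.
From mathcomp Require Import finmap.
From mathcomp.multinomials Require Import monalg.
From mathcomp.real_closed Require Import complex.
From mathcomp Require Import reals.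
From mathcomp Require Import zify ring.
Import GRing.Theory Num.Theory.
Local Open Scope ring_scope.

Section Proof.
Variable R : realType.
Local Notation C := (R[i]).
Local Notation V := (SV R).

Lemma sidx_eqE (x y : sidx) : (x == y) = (sidx_enc x == sidx_enc y).
Proof. by apply/eqP/eqP => [->//|/(pcan_inj sidx_encK)]. Qed.

Lemma msupp1 (k : sidx) : msupp (<< k >> : V) = [fset k]%fset.
Proof. by rewrite msuppU oner_eq0. Qed.

Lemma monU_scale (c : C) k : (<< c *g k >> : V) = c *: << k >>.
Proof. by apply/malgP => t; rewrite mcoeffZ !mcoeffU mulr_natr. Qed.

Lemma sbrUU a b : sbracket (<< a >> : V) << b >> = br R a b.
Proof.
by rewrite /sbracket msupp1 big_seq_fset1 msupp1 big_seq_fset1 !mcoeffUU mulr1 scale1r.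
Qed.

Lemma sbr0l (y : V) : sbracket 0 y = 0.
Proof. by rewrite /sbracket msupp0 big_seq_fset0. Qed.
Lemma sbr0r (y : V) : sbracket y 0 = 0.
Proof. by rewrite /sbracket big1 // => a _; rewrite msupp0 big_seq_fset0. Qed.

Lemma coefL a (w : V) t : (sbracket << a >> w)@_t =
  \sum_(b <- msupp w) w@_b * (br R a b)@_t.
Proof.
rewrite /sbracket msupp1 big_seq_fset1 raddf_sum /=; apply: eq_bigr => b _.
by rewrite mcoeffZ mcoeffUU mul1r.
Qed.

Lemma coefR (w : V) b t : (sbracket w << b >>)@_t =
  \sum_(a <- msupp w) w@_a * (br R a b)@_t.
Proof.
rewrite /sbracket raddf_sum /=; apply: eq_bigr => a _.
by rewrite msupp1 big_seq_fset1 mcoeffZ mcoeffUU mulr1.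
Qed.

Lemma sum_delta (w : V) (f : sidx -> C) b0 k :
  (forall b, f b = if b == b0 then k else 0) ->
  \sum_(b <- msupp w) w@_b * f b = w@_b0 * k.
Proof.
move=> hf.
have [b0in|b0out] := boolP (b0 \in msupp w).
  rewrite (bigD1_seq b0) //= ?fset_uniq // hf eqxx big1 ?addr0 // => b nb.
  by rewrite hf (negbTE nb) mulr0.
rewrite (mcoeff_outdom b0out) mul0r big1_seq // => b /andP[_ bin].
rewrite hf; case: eqP => [eb|_]; last by rewrite mulr0.
by rewrite eb in bin; rewrite bin in b0out.
Qed.

Lemma sum_supp1 (w : V) (f : sidx -> C) b0 :
  (forall b, b \in msupp w -> b = b0) ->
  \sum_(b <- msupp w) w@_b * f b = w@_b0 * f b0.
Proof.
move=> hs; rewrite -(@sum_delta w (fun b => if b == b0 then f b0 else 0) b0 (f b0)) //.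
apply: eq_big_seq => b /hs ->; by rewrite eqxx.
Qed.

Lemma grU (c : C) k : in_grade (dg2 k) (<< c *g k >> : V).
Proof.
move=> t; rewrite msuppU; case: eqP => _; first by rewrite in_fset0.
by rewrite in_fset1 => /eqP ->.
Qed.

Lemma zero_gr h (v : V) : in_grade h v -> (forall k, dg2 k = h -> v@_k = 0) -> v = 0.
Proof.
move=> hg hk; apply/malgP => k; rewrite mcoeff0.
have [kin|kout] := boolP (k \in msupp v); first by apply/hk/hg.
exact: mcoeff_outdom.
Qed.


Definition lam (b : sidx) : C :=
  match b with sM _ => 2%:R | sY _ => 1 | _ => 0 end.

Lemma brN0_eig b : br R (sN 0) b = lam b *: (<< b >> : V).
Proof.
case: b => [m|m|m|m|||] /=; rewrite ?scale0r //.
- rewrite mulr0z monalgU0 add0r addr0.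
  case: (eqVneq m 0) => [->|nz]; first by rewrite expr0n /= subr0 mulr0z mulr0 monalgU0 oppr0.
  by rewrite ?(negbTE nz) mul0r monalgU0 oppr0.
- by rewrite add0r monU_scale.
- case: (eqVneq m 0) => [->|nz]; first by rewrite mulr0z mul0r monalgU0.
  by rewrite add0r (negbTE nz) mulr0 monalgU0.
- by rewrite add0r scale1r.
Qed.

Lemma coef_lam c t : (lam c *: (<< c >> : V))@_t = if c == t then lam t else 0.
Proof.
rewrite mcoeffZ mcoeffU; case: (eqVneq c t) => [->|nct]; first by rewrite ?eqxx /= ?mulr1.
by rewrite /= mulr0.
Qed.

Section Phi.
Variable j : int.
Variable phi : {linear V -> V}.
Hypothesis hd : half_derivation phi.
Hypothesis hg : has_degree2 (2 * j + 1) phi.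

Lemma HD a b t : (phi (br R a b))@_t = 2%:R^-1 *
  (\sum_(c <- msupp (phi << a >>)) (phi << a >>)@_c * (br R c b)@_t +
   \sum_(c <- msupp (phi << b >>)) (phi << b >>)@_c * (br R a c)@_t).
Proof. by rewrite -sbrUU hd mcoeffZ mcoeffD coefL coefR. Qed.

Lemma grphi k : in_grade (2 * j + 1 + dg2 k) (phi << k >>).
Proof. exact/hg/grU. Qed.

Lemma two_neq0 : (2%:R : C) != 0.
Proof. by rewrite pnatr_eq0. Qed.


Lemma odd_gr k n h : dg2 k = h -> h = 2 * n + 1 -> k = sY n.
Proof. case: k => /= [m|m|m|m|||] h1 h2; try (exfalso; lia). congr sY; lia. Qed.

Lemma phiN0 : phi << sN 0 >> = 0.
Proof.
have key := HD (sN 0) (sY (j + 1)) (sM (2 * j + 2)).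
rewrite brN0_eig scale1r in key.
have s2 : \sum_(c <- msupp (phi << sY (j + 1) >>)) (phi << sY (j + 1) >>)@_c *
            (br R (sN 0) c)@_(sM (2 * j + 2)) =
          (phi << sY (j + 1) >>)@_(sM (2 * j + 2)) * 2%:R.
  rewrite -(@sum_delta _ (fun c => (br R (sN 0) c)@_(sM (2 * j + 2)))) //.
  by move=> c; rewrite brN0_eig coef_lam.
have suppv : forall c, c \in msupp (phi << sN 0 >>) -> c = sY j.
  move=> c /(grphi (sN 0)) e; apply: (@odd_gr _ j _ e); rewrite /=; lia.
rewrite s2 (@sum_supp1 _ (fun c => (br R c (sY (j + 1)))@_(sM (2 * j + 2))) _ suppv) in key.
have e1 : (br R (sY j) (sY (j + 1)))@_(sM (2 * j + 2)) = -1.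
  rewrite /= mcoeffU.
  have -> : (sM (j + (j + 1) + 1) == sM (2 * j + 2)) = true.
    by rewrite sidx_eqE /=; apply/eqP; congr pair; lia.
  have -> : j - (j + 1) = -1 by ring.
  by rewrite mulr1n.
rewrite e1 in key.
set w := (phi << sY (j + 1) >>)@_(sM (2 * j + 2)) in key.
set v := (phi << sN 0 >>)@_(sY j) in key.
have hv : v = 0.
  have : v = 2%:R * w - 2%:R * (2%:R^-1 * (v * (-1) + w * 2%:R)).
    by field.
  by rewrite -key subrr.
apply: (@zero_gr _ _ (grphi (sN 0))) => k e.
by rewrite (@odd_gr _ j _ e) //=; lia.
Qed.


Lemma stepN b t : (2%:R * lam b - lam t) * (phi << b >>)@_t = 0.
Proof.
have key := HD (sN 0) b t.
rewrite brN0_eig linearZ mcoeffZ phiN0 msupp0 big_seq_fset0 add0r in key.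
rewrite (@sum_delta _ (fun c => (br R (sN 0) c)@_t) t (lam t)) in key; last first.
  by move=> c; rewrite brN0_eig coef_lam.
by rewrite mulrBl -mulrA key mulrA mulfV ?two_neq0 // mul1r mulrC subrr.
Qed.

Lemma phi_nonY b : (forall m, b <> sY m) -> phi << b >> = 0.
Proof.
move=> nY; apply: (@zero_gr _ _ (grphi b)) => k e.
have [n hn] : exists n, 2 * j + 1 + dg2 b = 2 * n + 1.
  case: b nY {e} => [m|m|m|m|||] nY /=.
  - by exists (j + m); ring.
  - by exists (j + m); ring.
  - by exists (j + m); ring.
  - by case: (nY m).
  - by exists j; ring.
  - by exists j; ring.
  - by exists j; ring.
have ek := @odd_gr _ _ _ e hn.
have := stepN b k; rewrite ek /=.
case: b nY {e hn} => [m|m|m|m|||] nY /=; try by case: (nY m).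
all: try by rewrite mulr0 sub0r mulN1r => /eqP; rewrite oppr_eq0 => /eqP.
have -> : (2%:R * 2%:R - 1 : C) = 3%:R by ring.
by move/eqP; rewrite mulf_eq0 pnatr_eq0 /= => /eqP.
Qed.


Lemma phiY1 : phi << sY (j + 1) >> = 0.
Proof.
set w := phi << sY (j + 1) >>.
have nz : forall t, t \in msupp w -> w@_t != 0 by move=> t; rewrite mcoeff_neq0.
have kill : forall t, lam t = 0 -> t \in msupp w -> False.
  move=> t lt tin; have := stepN (sY (j + 1)) t.
  rewrite lt /= mulr1 subr0 => /eqP; rewrite mulf_eq0 (negbTE two_neq0) /=.
  by rewrite (negbTE (nz _ tin)).
have suppw : forall t, t \in msupp w -> t = sM (2 * j + 2).
  move=> t tin; have e := grphi (sY (j + 1)) _ tin.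
  case: t tin e => [m|m|m|m|||] tin /= e; try by exfalso; apply: (kill _ _ tin).
  - by congr sM; lia.
  - exfalso; lia.
have key := HD (sL 0) (sY (j + 1)) (sM (2 * j + 2)).
have ebr : br R (sL 0) (sY (j + 1)) =
   ((j + 1)%:~R + (1 - 0)%:~R / 2%:R) *: (<< sY (j + 1) >> : V).
  by rewrite /= add0r monU_scale.
rewrite ebr linearZ mcoeffZ (@phi_nonY (sL 0)) // msupp0 big_seq_fset0 add0r in key.
rewrite (@sum_supp1 _ (fun c => (br R (sL 0) c)@_(sM (2 * j + 2))) _ suppw) in key.
have e1 : (br R (sL 0) (sM (2 * j + 2)))@_(sM (2 * j + 2)) = (2 * j + 2)%:~R.
  by rewrite /= add0r mcoeffUU.
have z1 : ((1:int)%:~R : C) = 1 by [].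
have z2 : ((2:int)%:~R : C) = 2%:R by [].
rewrite e1 subr0 !intrD intrM z1 z2 in key.
fold w in key.
set x := w@_(sM (2 * j + 2)) in key.
have hx : x = 0.
  have : x = 2%:R * ((j%:~R + 1 + 1 / 2%:R) * x - 2%:R^-1 * (x * (2%:R * j%:~R + 2%:R))).
    by field.
  by rewrite key subrr mulr0.
apply: (@zero_gr _ _ (grphi (sY (j + 1)))) => k e.
have [kin|kout] := boolP (k \in msupp w); last exact: mcoeff_outdom.
by rewrite (suppw _ kin).
Qed.

Lemma phiY n : phi << sY n >> = 0.
Proof.
have := hd << sN (n - j - 1) >> << sY (j + 1) >>.
rewrite sbrUU /= (_ : n - j - 1 + (j + 1) = n); last by ring.
by rewrite phiY1 (@phi_nonY (sN _)) // sbr0l sbr0r addr0 scaler0.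
Qed.

Lemma phi_basis k : phi << k >> = 0.
Proof. by case: k => [m|m|m|m|||]; rewrite ?phiY // phi_nonY. Qed.

End Phi.
End Proof.

Theorem mainTheorem2 (R : realType) (j : int) (phi : {linear SV R -> SV R}) :
  half_derivation phi -> has_degree2 (2 * j + 1) phi -> forall x, phi x = 0.
Proof.
move=> hd hg x; rewrite (monalgE x) linear_sum big1 // => k _.
rewrite monU_scale linearZ (@phi_basis R j phi hd hg). exact: scaler0.
Qed.
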